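(* Fix $(\sigma,i)$ with $1\le\sigma\le l$ and $1\le i\le d_\sigma$, and let $b_i^{(\sigma)}\colon C_i^{(\sigma)}\to\mathbb{A}^d$ be the chart described below. Then there exists a $k$-derivation $\psi$ of $\Gamma(C_i^{(\sigma)},\mathcal{O})=k[u_j^{(\pi)}]$ such that $b_i^{(\sigma),*}\partial_\mathbf{d}=u_i^{(\sigma)}\cdot\psi$ (as rational vector fields) and the coefficients of $\psi$ in the basis $\{\partial/\partial u_j^{(\pi)}\}$ generate the unit ideal. In particular the pullback $1$-foliation $b_i^{(\sigma),*}\mathscr{F}$, which is generated by $\psi$, is regular.
   Context: $k$ algebraically closed of characteristic $p>0$; $\mathbf{d}=(d_1,\dots,d_l)$ with $0\le d_\lambda\le p-1$; $\mathbb{A}^d$ has coordinates $x_j^{(\pi)}$ ($1\le\pi\le l$, $0\le j\le d_\pi$); $\partial_\mathbf{d}=\sum_\pi\sum_{j=1}^{d_\pi}x_j^{(\pi)}\partial/\partial x_{j-1}^{(\pi)}$ and $\mathscr{F}=\mathcal{O}_{\mathbb{A}^d}\cdot\partial_\mathbf{d}$. The chart $C_i^{(\sigma)}=\operatorname{Spec}k[u_j^{(\pi)}\mid 1\le\pi\le l,\ 0\le j\le d_\pi]$ (an affine chart of the weighted blow-up of $\mathbb{A}^d$ giving $x_j^{(\pi)}$ weight $j$) maps to $\mathbb{A}^d$ via: $x_0^{(\pi)}=u_0^{(\pi)}$ for all $\pi$; $x_i^{(\sigma)}=(u_i^{(\sigma)})^i$; $x_j^{(\pi)}=(u_i^{(\sigma)})^j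 u_j^{(\pi)}$ for all $(\pi,j)$ with $j\ge1$ and $(\pi,j)\ne(\sigma,i)$. The pullback $1$-foliation on $C_i^{(\sigma)}$ is the saturation of the subsheaf of the tangent sheaf generated by $b_i^{(\sigma),*}\partial_\mathbf{d}$ (which is birational). *)

(* Defs.v *)
From HB Require Import structures.
From mathcomp Require Import all_boot all_order all_algebra.
From mathcomp Require Import mpoly.
Set Implicit Arguments. Unset Strict Implicit. Unset Printing Implicit Defensive.
Import GRing.Theory.
Local Open Scope ring_scope.

(* Index set of the coordinates: pairs (pi, j) with pi : 'I_l (0-based
   version of 1 <= pi <= l) and 0 <= j <= d pi. *)
Definition Var (l : nat) (d : 'I_l -> nat) : finType :=
  @sigT 'I_l (fun pi => 'I_(d pi).+1).

Definition Pol (k : fieldType) (l : nat) (d : 'I_l -> nat) :=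
  {mpoly k[#|Var d|]}.

Definition U (k : fieldType) (l : nat) (d : 'I_l -> nat) (v : Var d)
  : Pol k d := 'X_(enum_rank v).

(* The variable u_i^(sigma) (meaningful for i <= d sigma). *)
Definition Usi (k : fieldType) (l : nat) (d : 'I_l -> nat) (sigma : 'I_l)
  (i : nat) : Pol k d :=
  U k (Tagged (fun pi => 'I_(d pi).+1) (inord i : 'I_(d sigma).+1)).

(* b^* x_v for the chart C_i^(sigma):
   x_0^(pi) = u_0^(pi);  x_i^(sigma) = (u_i^(sigma))^i;
   x_j^(pi) = (u_i^(sigma))^j u_j^(pi) otherwise. *)
Definition bstar (k : fieldType) (l : nat) (d : 'I_l -> nat) (sigma : 'I_l)
  (i : nat) (v : Var d) : Pol k d :=
  let j := val (tagged v) in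
  if j == 0%N then U k v
  else if (tag v == sigma) && (j == i) then Usi k d sigma i ^+ i
  else Usi k d sigma i ^+ j * U k v.

(* b^*(partial_d x_v): partial_d x_j^(pi) = x_(j+1)^(pi) if j < d pi,
   and 0 if j = d pi. *)
Definition bstar_dx (k : fieldType) (l : nat) (d : 'I_l -> nat)
  (sigma : 'I_l) (i : nat) (v : Var d) : Pol k d :=
  let j := val (tagged v) in
  if (j < d (tag v))%N then
    bstar k sigma i (Tagged (fun pi => 'I_(d pi).+1)
                            (inord j.+1 : 'I_(d (tag v)).+1))
  else 0.

Definition derivApp (k : fieldType) (l : nat) (d : 'I_l -> nat)
  (c : Var d -> Pol k d) (f : Pol k d) : Pol k d :=
  \sum_(v : Var d) c v * mderiv (enum_rank v) f.

(* Main.v *)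
Require Import Defs.
From HB Require Import structures.
From mathcomp Require Import all_boot all_order all_algebra.
From mathcomp Require Import mpoly.
From mathcomp Require Import ring.
Import GRing.Theory.
Local Open Scope ring_scope.
Section S.
Variables (k : fieldType) (l : nat) (d : 'I_l -> nat).
Implicit Types (c : Var d -> Pol k d) (f g : Pol k d).

Lemma dA_U c v : derivApp c (U k v) = c v.
Proof.
rewrite /derivApp /U (bigD1 v) //= big1 ?addr0.
  rewrite mderivX mnm1E eqxx mulr1n scale1r.
  have -> : (U_(enum_rank v) - U_(enum_rank v))%MM = 0%MM.
    by apply/mnmP=> j; rewrite mnmBE subnn mnmE.
  by rewrite mpolyX0 mulr1.
move=> w /negPf hw; rewrite mderivX mnm1E.
by rewrite (inj_eq enum_rank_inj) eq_sym hw scale0r mulr0.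
Qed.

Lemma dA_M c f g : derivApp c (f * g) = f * derivApp c g + g * derivApp c f.
Proof.
rewrite /derivApp !mulr_sumr -big_split /=; apply: eq_bigr => v _.
rewrite mderivM mulrDr addrC; congr (_ + _); rewrite mulrCA //. rewrite [LHS]mulrCA [RHS]mulrCA; congr (_ * _); rewrite mulrC //.
Qed.

Lemma dA_X c f n : derivApp c (f ^+ n.+1) = n.+1%:R * f ^+ n * derivApp c f.
Proof.
elim: n => [|n IH]; first by rewrite expr1 expr0 mulr1 mul1r.
rewrite exprS dA_M IH -[n.+2]addn1 natrD !mulrDl mul1r !mulrA [f * _]mulrC -[_ * f * _]mulrA -exprS //.
Qed.
Lemma dA_X' c f n : (0 < n)%N -> derivApp c (f ^+ n) = n%:R * f ^+ n.-1 * derivApp c f.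
Proof. by case: n => // n _; rewrite dA_X. Qed.
End S.

Lemma alg1 (R : comNzRingType) (u w N V b : R) (n : nat) : (0 < n)%N ->
  u * (u ^+ n * (N - n%:R * b * w * V) + V * (n%:R * u ^+ n.-1 * (u * w * b)))
  = u ^+ n.+1 * N.
Proof. case: n => // n _ /=; set m := n.+1%:R; rewrite !exprS; ring. Qed.

Lemma alg2 (R : comNzRingType) (u w b : R) (n : nat) : (0 < n)%N ->
  n%:R * b = 1 -> u * (n%:R * u ^+ n.-1 * (u * w * b)) = u ^+ n.+1 * w.
Proof.
case: n => // n _ /=; set m := n.+1%:R => hm.
have -> : u * (m * u ^+ n * (u * w * b)) = u ^+ n.+2 * w * (m * b).
  by rewrite !exprS; ring.
by rewrite hm mulr1.
Qed.

Lemma alg3 (R : comNzRingType) (P x y z : R) :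
  P * (y - z * x) = P * y - (z * P) * x.
Proof. ring. Qed.

Section M.
Variables (k : fieldType) (l : nat) (d : 'I_l -> nat) (sigma : 'I_l) (i : nat).
Hypotheses (hi1 : (1 <= i)%N) (hi2 : (i <= d sigma)%N).
Variable b : Pol k d.
Hypothesis hb : i%:R * b = 1.
Local Notation T := (fun pi => 'I_(d pi).+1).
Local Notation u := (Usi k d sigma i).

Definition sv : Var d := Tagged T (inord i : 'I_(d sigma).+1).
Definition nxt (v : Var d) : Pol k d :=
  if (val (tagged v) < d (tag v))%N then
    (if (tag v == sigma) && ((val (tagged v)).+1 == i) then 1
     else U k (Tagged T (inord (val (tagged v)).+1 : 'I_(d (tag v)).+1)))
  else 0.
Definition w := nxt sv.
Definition cc (v : Var d) : Pol k d :=
  if (tag v == sigma) && (val (tagged v) == i) then u * w * b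
  else nxt v - (val (tagged v))%:R * b * w * U k v.

Lemma bdx (v : Var d) : bstar_dx k sigma i v = u ^+ (val (tagged v)).+1 * nxt v.
Proof.
case: v => pi t; rewrite /bstar_dx /nxt /bstar /=.
case: ifP => h; last by rewrite mulr0.
rewrite inordK ?ltnS //=.
case: ifP => h2; last by [].
by move/andP: h2 => [_ /eqP ->]; rewrite mulr1.
Qed.

Lemma isS_eq (v : Var d) : (tag v == sigma) && (val (tagged v) == i) -> v = sv.
Proof.
case: v => pi t /= /andP [/eqP e /eqP ti]; subst pi.
rewrite /sv; congr (Tagged T _); apply: val_inj; by rewrite /= inordK ?ltnS.
Qed.

Lemma val_sv : val (tagged sv) = i.
Proof. by rewrite /sv /= inordK ?ltnS. Qed.

Lemma cc_s : cc sv = u * w * b.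
Proof. by rewrite /cc val_sv /= !eqxx. Qed.

Lemma key (v : Var d) : u * derivApp cc (bstar k sigma i v) = bstar_dx k sigma i v.
Proof.
have dAu : derivApp cc u = cc sv := @dA_U k l d cc sv.
rewrite bdx.
case: (boolP ((tag v == sigma) && (val (tagged v) == i))) => hs.
  rewrite (isS_eq _ hs) /bstar val_sv.
  have -> : (i == 0)%N = false by rewrite eqn0Ngt hi1.
  rewrite /= !eqxx /= dA_X' // dAu cc_s.
  exact: alg2.
rewrite /bstar (negPf hs).
case: (boolP (val (tagged v) == 0%N)) => [/eqP j0|jn0].
  rewrite j0 /= dA_U /cc (negPf hs) j0 !mul0r subr0 expr1 //.
rewrite dA_M dA_X' ?lt0n // dAu cc_s dA_U /cc (negPf hs).
by apply: alg1; rewrite lt0n.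
Qed.

Definition P (m : nat) : Pol k d := \prod_(m <= q < i) (q%:R * b * w).
Definition vv (n : nat) : Pol k d :=
  if (n < i)%N then U k (Tagged T (inord n : 'I_(d sigma).+1)) else 1.
Definition g (n : nat) : Pol k d :=
  P n.+1 * cc (Tagged T (inord n : 'I_(d sigma).+1)).

Lemma g_eq n : (n < i)%N -> g n = P n.+1 * vv n.+1 - P n * vv n.
Proof.
move=> ni.
have nd : (n < (d sigma).+1)%N := (leq_trans ni (leqW hi2)).
rewrite /g /cc /= inordK //.
have -> : (n == i) = false by apply/negbTE; rewrite neq_ltn ni.
rewrite eqxx /= /nxt /= inordK // (leq_trans ni hi2) /=.
rewrite /P (big_ltn ni) /vv ni.
rewrite alg3; congr (_ * _ - _).
rewrite eqxx /=; case: ifP => [/eqP ->|/negbT ne]; first by rewrite ltnn.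
by rewrite ltn_neqAle ne ni.
Qed.

Lemma tele n : (n <= i)%N -> \sum_(0 <= j < n) g j = P n * vv n.
Proof.
elim: n => [_|n IH ni].
  by rewrite big_geq // /P (big_ltn hi1) mulr0n !mul0r.
rewrite big_nat_recr //= IH ?(ltnW ni) // g_eq //.
by rewrite addrC subrK.
Qed.

Definition aa (v : Var d) : Pol k d :=
  if (tag v == sigma) && (val (tagged v) < i)%N then P (val (tagged v)).+1 else 0.

Lemma sum1 : \sum_(v : Var d) aa v * cc v = 1.
Proof.
have E1 : \sum_(v : Var d) aa v * cc v = \sum_(v : Var d | tag v == sigma) aa v * cc v.
  symmetry; apply: big_rmcond => v /negPf h; by rewrite /aa h mul0r.
rewrite E1.
have E2 : \sum_(v : Var d | tag v == sigma) aa v * cc v =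
  \sum_(pi | pi == sigma) \sum_(t : T pi) aa (Tagged T t) * cc (Tagged T t).
  rewrite (sig_big_dep (fun pi => pi == sigma) (fun _ _ => true)
     (fun pi t => aa (Tagged T t) * cc (Tagged T t))).
  by apply: eq_big => [[pi t]|[pi t]] //=; rewrite andbT.
rewrite E2 big_pred1_eq.
pose h := fun j : nat => aa (Tagged T (inord j : 'I_(d sigma).+1)) *
                               cc (Tagged T (inord j : 'I_(d sigma).+1)).
have E3 : \sum_(t : T sigma) aa (Tagged T t) * cc (Tagged T t) =
   \sum_(j < (d sigma).+1) h j.
  by apply: eq_bigr => t _; rewrite /h inord_val.
rewrite E3 -(big_mkord xpredT h).
have E4 : \sum_(0 <= j < (d sigma).+1) h j = \sum_(0 <= j < i) h j + \sum_(i <= j < (d sigma).+1) h j.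
  by apply: big_cat_nat; rewrite // leqW.
rewrite E4.
rewrite [X in _ + X]big1_seq ?addr0; last first.
  move=> j /andP [_]; rewrite mem_index_iota => /andP [ij jd].
  by rewrite /h /aa /= inordK // ltnNge ij andbF mul0r.
rewrite (@eq_big_nat _ _ _ 0 i h g); last first.
  move=> j /andP [_ ji].
  have jd : (j < (d sigma).+1)%N := (leq_trans ji (leqW hi2)).
  have ss : sigma == sigma by apply/eqP.
  by rewrite /h /aa /g /= inordK // ss ji.
by rewrite tele // /P big_geq // /vv ltnn mul1r.
Qed.
End M.

Theorem mainTheorem10 (k : closedFieldType) (p : nat) (hp : p \in [pchar k])
  (l : nat) (d : 'I_l -> nat) (hd : forall pi, (d pi <= p.-1)%N)
  (sigma : 'I_l) (i : nat) (hi1 : (1 <= i)%N) (hi2 : (i <= d sigma)%N) :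
  exists c : Var d -> Pol k d,
    (forall v : Var d,
        Usi k d sigma i * derivApp c (bstar k sigma i v) = bstar_dx k sigma i v)
    /\ exists a : Var d -> Pol k d, \sum_(v : Var d) a v * c v = 1.
Proof.
have inz : (i%:R : k) != 0.
  rewrite -(dvdn_pcharf hp); apply/negP => /dvdn_leq => /(_ hi1).
  have p0 : (0 < p)%N := prime_gt0 (pcharf_prime hp).
  have := leq_trans hi2 (hd sigma); rewrite -ltnS prednK // => h1 h2.
  by move: (leq_trans h1 h2); rewrite ltnn.
pose b : Pol k d := ((i%:R : k)^-1)%:MP.
have hb : i%:R * b = 1.
  by rewrite /b -(rmorph_nat (@mpolyC _ k)) -rmorphM mulfV // rmorph1.
exists (@cc k l d sigma i b); split.
  by move=> v; apply: key.
exists (@aa k l d sigma i b); exact: sum1.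
Qed.
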